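(* Let $q$ be an odd prime power, $d\ge 2$, $\gamma\in\mathbb{F}_q^*$ a non-square, and let $W\subset \{v\in\mathbb{F}_q^d:\|v\|\in\{1,\gamma\}\}$ contain exactly one element of each pair $\{v,-v\}$. Let $E\subset\mathbb{F}_q^d$ and let $F\subset W\times\mathbb{F}_q$, identified with the set of non-degenerate hyperplanes $\{H_{v,t}:(v,t)\in F\}$ (each non-degenerate hyperplane has exactly one such representation), and write $F(v,t)$ for the indicator function of $F$. Then $$|\Delta(E,F)| \ge \frac{|E|^2|F|^2}{2q^{-1}|E|^2|F|^2 + 2q^{d-1}|E||F|\cdot \max_{v\in W}\sum_{t\in\mathbb{F}_q}F(v,t)}.$$ In particular, if $|E||F|>q^{d+1}$, then $|\Delta(E,F)| > q/4$, so $|\Delta(E,F)|\gg q$.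
   Context: $\mathbb{F}_q$ is the field with $q$ elements; $x\cdot y=\sum_i x_iy_i$, $\|x\|=x_1^2+\dots+x_d^2$. $H_{v,t}=\{y\in\mathbb{F}_q^d: y\cdot v=t\}$; such a hyperplane is non-degenerate if $\|v\|\ne 0$. $O_d(\mathbb{F}_q)$ is the group of linear maps $\theta$ of $\mathbb{F}_q^d$ with $\|\theta y\|=\|y\|$ for all $y$. Pairs $(x,h)$ and $(x',h')$ (point, hyperplane) are equivalent if there is $\theta\in O_d(\mathbb{F}_q)$ with $\{\theta(y-x)+x': y\in h\}=h'$. $\Delta(E,F)$ is the set of equivalence classes of pairs $(x,H_{v,t})$ with $x\in E$, $(v,t)\in F$. *)

(* Defs.v *)
From HB Require Import structures.
From mathcomp Require Import all_boot all_order all_algebra all_field.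
Set Implicit Arguments. Unset Strict Implicit. Unset Printing Implicit Defensive.
Import Order.TTheory GRing.Theory Num.Theory.
Local Open Scope ring_scope.

Section Defs.
Variables (K : finFieldType) (d : nat).

Definition dotv (x y : 'rV[K]_d) : K := \sum_(i < d) x 0 i * y 0 i.

Definition normv (x : 'rV[K]_d) : K := \sum_(i < d) x 0 i ^+ 2.

Definition hyperplane (v : 'rV[K]_d) (t : K) : {set 'rV[K]_d} :=
  [set y | dotv y v == t].

Definition orthb (M : 'M[K]_d) : bool := [forall y, normv (y *m M) == normv y].

Definition pair_equiv (p p' : 'rV[K]_d * {set 'rV[K]_d}) : bool :=
  [exists M : 'M[K]_d,
     orthb M && ([set (y - p.1) *m M + p'.1 | y in p.2] == p'.2)].

Definition eqclass (p : 'rV[K]_d * {set 'rV[K]_d}) :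
  {set 'rV[K]_d * {set 'rV[K]_d}} := [set p' | pair_equiv p p'].

Definition Delta (E : {set 'rV[K]_d}) (F : {set 'rV[K]_d * K}) :
  {set {set 'rV[K]_d * {set 'rV[K]_d}}} :=
  [set eqclass (x, hyperplane vt.1 vt.2) | x in E, vt in F].

End Defs.

(* Main.v *)
Require Import Defs.
From HB Require Import structures.
From mathcomp Require Import all_boot all_order all_algebra all_field.
From mathcomp Require Import ring lra.
Set Implicit Arguments. Unset Strict Implicit. Unset Printing Implicit Defensive.
Import Order.TTheory GRing.Theory Num.Theory.
Local Open Scope ring_scope.

Section Dot.
Variables (K : finFieldType) (d : nat).
Implicit Types (x y z u v w : 'rV[K]_d).
Local Notation dot := (@dotv K d).

Lemma dotvC x y : dot x y = dot y x.
Proof. by apply: eq_bigr => i _; rewrite mulrC. Qed.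
Lemma dotvDl x y z : dot (x + y) z = dot x z + dot y z.
Proof. by rewrite /dotv -big_split; apply: eq_bigr => i _; rewrite !mxE mulrDl. Qed.
Lemma dotvZl a x z : dot (a *: x) z = a * dot x z.
Proof. by rewrite /dotv mulr_sumr; apply: eq_bigr => i _; rewrite !mxE mulrA. Qed.
Lemma dotvNl x z : dot (- x) z = - dot x z.
Proof. by rewrite -scaleN1r dotvZl mulN1r. Qed.
Lemma dotvBl x y z : dot (x - y) z = dot x z - dot y z.
Proof. by rewrite dotvDl dotvNl. Qed.
Lemma dotv0l z : dot 0 z = 0.
Proof. by rewrite /dotv big1 // => i _; rewrite mxE mul0r. Qed.
Lemma dotvDr x y z : dot z (x + y) = dot z x + dot z y.
Proof. by rewrite !(dotvC z) dotvDl. Qed.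
Lemma dotvZr a x z : dot z (a *: x) = a * dot z x.
Proof. by rewrite !(dotvC z) dotvZl. Qed.
Lemma dotvBr x y z : dot z (x - y) = dot z x - dot z y.
Proof. by rewrite !(dotvC z) dotvBl. Qed.
Lemma normvE x : normv x = dot x x.
Proof. by apply: eq_bigr => i _; rewrite expr2. Qed.
Lemma dot_delta y i : dot y (delta_mx 0 i) = y 0 i.
Proof.
rewrite /dotv (bigD1 i) //= big1 => [|j /negbTE ji]; rewrite mxE ?eqxx ?ji ?mulr1 ?mulr0 ?addr0 //.

Qed.
Lemma dot_eq0 w : (forall y, dot y w = 0) -> w = 0.
Proof. by move=> H; apply/rowP => i; rewrite mxE -dot_delta dotvC H. Qed.
Lemma normvZ a x : normv (a *: x) = a ^+ 2 * normv x.
Proof. by rewrite !normvE dotvZl dotvZr mulrA expr2. Qed.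
End Dot.

Section Hyp.
Variables (K : finFieldType) (d : nat).
Implicit Types (x y z u v w : 'rV[K]_d).
Local Notation dot := (@dotv K d).

Lemma hyp_sub v t u b : normv v != 0 ->
  (forall y, dot y v = t -> dot y u = b) ->
  exists c, u = c *: v /\ b = c * t.
Proof.
move=> nv H.
set y0 := (t / normv v) *: v.
have y0v : dot y0 v = t by rewrite dotvZl -normvE mulfVK.
have Hz : forall z, dot z v = 0 -> dot z u = 0.
  move=> z zv; have := H (y0 + z); rewrite dotvDl y0v zv addr0 => /(_ erefl).
  by rewrite dotvDl (H _ y0v) => /eqP; rewrite -subr_eq0 addrC addKr => /eqP.
set c := dot v u / normv v.
have wv : dot (u - c *: v) v = 0.
  by rewrite dotvBl dotvZl -normvE mulfVK // dotvC subrr.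
have w0 : u - c *: v = 0.
  apply: dot_eq0 => y.
  set z := y - (dot y v / normv v) *: v.
  have zv : dot z v = 0 by rewrite dotvBl dotvZl -normvE mulfVK // subrr.
  have -> : y = z + (dot y v / normv v) *: v by rewrite subrK.
  rewrite dotvDl dotvZl [dot v _]dotvC wv mulr0 addr0.
  by rewrite dotvBr dotvZr (Hz _ zv) zv mulr0 subrr.
have uE : u = c *: v by apply/eqP; rewrite -subr_eq0 w0.
exists c; split => //.
by rewrite -(H _ y0v) uE dotvZr y0v.
Qed.

Lemma orth_dot (M : 'M[K]_d) : (2%:R : K) != 0 -> orthb M ->
  forall a b, dot (a *m M) (b *m M) = dot a b.
Proof.
move=> h2 /forallP oM a b.
have := eqP (oM (a + b)); rewrite mulmxDl !normvE !dotvDl !dotvDr.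
rewrite -!normvE (eqP (oM a)) (eqP (oM b)) !normvE.
rewrite [dot (b *m M) _]dotvC [dot b a]dotvC => /eqP.
move=> E; move: E; set X := dot (a *m M) (b *m M); set Y := dot a b.
set A := dot a a; set B := dot b b => /eqP E.
have E2 : A + (X + X) + B = A + (Y + Y) + B.
  by rewrite (addrA A X X) -(addrA (A + X) X B) E !addrA.
move/addIr: E2 => /addrI E4.
have : X * 2%:R = Y * 2%:R by rewrite !mulr_natr !mulr2n.
by move/mulIf; apply.
Qed.
End Hyp.

Lemma two_neq0 (K : finFieldType) : odd #|K| -> (2%:R : K) != 0.
Proof.
move=> oK; apply/negP => /eqP h2.
have c2 : 2%N \in [pchar K] by rewrite inE /= h2 eqxx.
have := card_pprimeChar c2.
set n := logn _ _ => cK.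
have : odd #|K| by [].
rewrite [#|K|]cK oddX /= orbF => /eqP n0.
have := finNzRing_gt1 K; rewrite [#|K|]cK n0 expn0 ltnn //.
Qed.

Section Inv.
Variables (K : finFieldType) (d : nat) (gamma : K).
Hypothesis h2 : (2%:R : K) != 0.
Hypothesis hg : ~~ [exists y : K, y ^+ 2 == gamma].
Local Notation dot := (@dotv K d).

Lemma norm_class (a b c : K) : (a == 1) || (a == gamma) -> (b == 1) || (b == gamma) ->
  a = c ^+ 2 * b -> a = b /\ c ^+ 2 = 1.
Proof.
have ng : forall y : K, y ^+ 2 != gamma by move=> y; apply: contra hg => h; apply/existsP; exists y.
have g1 : gamma != 1 by rewrite eq_sym; move: (ng 1); rewrite expr1n.
case/orP => /eqP ->; case/orP => /eqP -> E.
- by split=> //; rewrite E mulr1.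
- exfalso; have c0 : c != 0.
    by apply/eqP => c0; move: E; rewrite c0 expr0n mul0r => /eqP; rewrite oner_eq0.
  have : (c ^+ 2)^-1 * (c ^+ 2 * gamma) = gamma by rewrite mulKf // expf_neq0.
  rewrite -E mulr1 -exprVn => /eqP; apply/negP; exact: ng.
- by exfalso; rewrite mulr1 in E; move: (ng c); rewrite -E eqxx.
- have g0 : gamma != 0 by rewrite eq_sym; move: (ng 0); rewrite expr0n.
  by split=> //; apply: (mulIf g0); rewrite mul1r -E.
Qed.

Lemma pair_inv x v t x' v' t' :
  (normv v == 1) || (normv v == gamma) -> (normv v' == 1) || (normv v' == gamma) ->
  pair_equiv (x, hyperplane v t) (x', hyperplane v' t') ->
  normv v = normv v' /\ (t - dot x v) ^+ 2 = (t' - dot x' v') ^+ 2.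
Proof.
move=> nv nv' /existsP[M /andP[oM /eqP /= S]].
have dM := orth_dot h2 oM.
set u := v *m M.
have nu : normv u = normv v by rewrite /u; have /forallP := oM => /(_ v) /eqP.
have nv'0 : normv v' != 0.
  case/orP: nv' => /eqP ->; first exact: oner_neq0.
  by apply: contra hg => /eqP g0; apply/existsP; exists 0; rewrite expr0n /= g0.
have [c [uE bE]] : exists c, u = c *: v' /\ (t - dot x v) + dot x' u = c * t'.
  apply: hyp_sub nv'0 _ => y yv.
  have : y \in hyperplane v' t' by rewrite inE yv.
  rewrite -S => /imsetP [z]; rewrite inE => /eqP zv ->.
  by rewrite dotvDl /u dM dotvBl zv.
have E : normv v = c ^+ 2 * normv v' by rewrite -nu uE normvZ.
have [nE c2] := norm_class nv nv' E.
split => //.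
have -> : t - dot x v = c * (t' - dot x' v').
  by rewrite mulrBr -bE uE dotvZr addrK.
by rewrite exprMn c2 mul1r.
Qed.

End Inv.

Section Gen.
Variable T : finType.

Lemma sum_ind1 (A : {pred T}) a : a \in A -> \sum_(c in A) ((a == c)%:R : rat) = 1.
Proof.
move=> aA; rewrite (bigD1 a) //= eqxx big1 ?addr0 // => c /andP[_ /negbTE].
by rewrite eq_sym => ->.
Qed.

Lemma sum_ind1T (a : T) : \sum_c ((a == c)%:R : rat) = 1.
Proof.
rewrite (bigD1 a) //= eqxx big1 ?addr0 // => c /negbTE.
by rewrite eq_sym => ->.
Qed.

Lemma sum_ind2 (A : {pred T}) a b : a \in A ->
  \sum_(c in A) ((a == c)%:R * (b == c)%:R : rat) = (a == b)%:R.
Proof.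
move=> aA; rewrite (bigD1 a) //= eqxx mul1r big1 ?addr0 ?(eq_sym b) // => c /andP[_ /negbTE].
by rewrite eq_sym => ->; rewrite mul0r.
Qed.

Lemma sum_ind2T (a b : T) :
  \sum_c ((a == c)%:R * (b == c)%:R : rat) = (a == b)%:R.
Proof.
rewrite (bigD1 a) //= eqxx mul1r big1 ?addr0 ?(eq_sym b) // => c /negbTE.
by rewrite eq_sym => ->; rewrite mul0r.
Qed.

Lemma CS (A : {pred T}) (f : T -> rat) :
  (\sum_(i in A) f i) ^+ 2 <= #|A|%:R * \sum_(i in A) f i ^+ 2.
Proof.
have H : 0 <= \sum_(i in A) \sum_(j in A) (f i - f j) ^+ 2.
  by apply: sumr_ge0 => i _; apply: sumr_ge0 => j _; apply: sqr_ge0.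
have E : \sum_(i in A) \sum_(j in A) (f i - f j) ^+ 2 =
   2%:R * (#|A|%:R * \sum_(i in A) f i ^+ 2 - (\sum_(i in A) f i) ^+ 2).
  set S2 := \sum_(i in A) f i ^+ 2; set S := \sum_(i in A) f i.
  have inner : forall i, \sum_(j in A) (f i - f j) ^+ 2 =
      f i ^+ 2 * #|A|%:R - 2%:R * (f i * S) + S2.
    move=> i; under eq_bigr => j _ do rewrite sqrrB.
    rewrite big_split sumrB /= sumr_const sumrMnl -mulr_sumr -/S -/S2.
    by rewrite !mulr_natr -(mulr_natl (f i * S)) mulr_natl.
  under eq_bigr => i _ do rewrite inner.
  rewrite big_split sumrB /= sumr_const -mulr_suml -mulr_sumr -mulr_suml -/S -/S2.
  rewrite mulr_natr expr2; lra.
rewrite -subr_ge0; move: H; rewrite E; apply: contraTT; rewrite -!ltNge => H.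
by rewrite pmulr_rlt0.
Qed.
End Gen.

Section Fiber.
Variables (K : finFieldType) (d : nat).
Local Notation dot := (@dotv K d).
Local Notation q := (#|K|%:R : rat).

Lemma card_rV : \sum_(w : 'rV[K]_d) (1 : rat) = q ^+ d.
Proof.
by rewrite sumr_const card_mx mul1n natrX.
Qed.

Lemma fiber z : z != 0 ->
  q * \sum_(w : 'rV[K]_d) ((dot w z == 0)%:R : rat) = q ^+ d.
Proof.
move=> z0.
have [i zi] : exists i, z 0 i != 0.
  case: (pickP (fun i => z 0 i != 0)) => [i hi|H]; first by exists i.
  have z00 : z = 0 by apply/rowP => i; rewrite mxE; move: (H i) => /negbFE/eqP.
  by move: z0; rewrite z00 eqxx.
pose w0 : 'rV[K]_d := (z 0 i)^-1 *: delta_mx 0 i.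
have w0z : dot w0 z = 1 by rewrite dotvZl dotvC dot_delta mulVf.
have fib : forall c, \sum_(w : 'rV[K]_d) ((dot w z == c)%:R : rat) =
                     \sum_(w : 'rV[K]_d) ((dot w z == 0)%:R : rat).
  move=> c; rewrite (reindex_inj (addIr (c *: w0))) /=.
  apply: eq_bigr => w _; rewrite dotvDl dotvZl w0z mulr1.
  by rewrite -{2}(add0r c) (inj_eq (addIr c)).
rewrite -card_rV.
have -> : \sum_(w : 'rV[K]_d) (1:rat) = \sum_(w : 'rV[K]_d) \sum_(c : K) ((dot w z == c)%:R : rat).
  by apply: eq_bigr => w _; rewrite sum_ind1T.
rewrite exchange_big /=.
rewrite [RHS](eq_bigr (fun _ => \sum_(w : 'rV[K]_d) ((dot w z == 0)%:R : rat))); last by move=> c _; apply: fib.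
by rewrite sumr_const mulr_natl.
Qed.

End Fiber.

Section Count1.
Variables (K : finFieldType) (d : nat) (E : {set 'rV[K]_d}).
Local Notation dot := (@dotv K d).
Local Notation q := (#|K|%:R : rat).
Local Notation nE := (#|E|%:R : rat).

Definition Tf v := \sum_(x in E) \sum_(y in E) ((dot x v == dot y v)%:R : rat).
Definition gf v u := \sum_(x in E) ((dot x v == u)%:R : rat).
Definition Gf v := \sum_(u : K) (gf v u - nE / q) ^+ 2.

Lemma q_gt0 : 0 < q.
Proof. by rewrite ltr0n; apply/card_gt0P; exists 0. Qed.

Lemma inner_q x y : q * \sum_(w : 'rV[K]_d) ((dot x w == dot y w)%:R : rat) =
   q ^+ d + (x == y)%:R * (q ^+ d.+1 - q ^+ d).
Proof.
case: eqP => [->|/eqP xy].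
  under eq_bigr => w _ do rewrite eqxx.
  by rewrite card_rV mul1r exprS addrC subrK.
rewrite mul0r addr0 -(fiber (z := x - y)) ?subr_eq0 //; congr (_ * _).
by apply: eq_bigr => w _; rewrite [dot w _]dotvC dotvBl subr_eq0.
Qed.

Lemma Tall : \sum_(w : 'rV[K]_d) (q * Tf w - nE ^+ 2) = (q - 1) * q ^+ d * nE.
Proof.
rewrite sumrB -mulr_sumr sumr_const card_mx mul1n.
have -> : \sum_w Tf w = \sum_(x in E) \sum_(y in E) \sum_(w : 'rV[K]_d) ((dot x w == dot y w)%:R : rat).
  rewrite /Tf exchange_big /=; apply: eq_bigr => x _; exact: exchange_big.
rewrite mulr_sumr.
have H : forall x, q * \sum_(y in E) \sum_(w : 'rV[K]_d) ((dot x w == dot y w)%:R : rat) =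
   \sum_(y in E) (q ^+ d + (x == y)%:R * (q ^+ d.+1 - q ^+ d)).
  by move=> x; rewrite mulr_sumr; apply: eq_bigr => y _; exact: inner_q.
under eq_bigr => x xE do rewrite H.
under eq_bigr => x xE do rewrite big_split /= sumr_const -mulr_suml sum_ind1 //.
rewrite sumr_const -[(_ + _) *+ #|E|]mulr_natr -[_ ^+ d *+ #|E|]mulr_natr.
rewrite -[_ ^+ 2 *+ _]mulr_natr natrX exprS; ring.
Qed.
Lemma sum_gf v : \sum_(u : K) gf v u = nE.
Proof.
rewrite /gf exchange_big /=; under eq_bigr => x _ do rewrite sum_ind1T.
by rewrite sumr_const.
Qed.

Lemma sum_gf2 v : \sum_(u : K) gf v u ^+ 2 = Tf v.
Proof.
rewrite /Tf; under eq_bigr => u _ do rewrite expr2 /gf mulr_suml.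
rewrite exchange_big /=; apply: eq_bigr => x _.
under eq_bigr => u _ do rewrite mulr_sumr.
rewrite exchange_big /=; apply: eq_bigr => y _; exact: sum_ind2T.
Qed.

Lemma GT v : q * Gf v = q * Tf v - nE ^+ 2.
Proof.
have q0 : q != 0 by rewrite gt_eqF ?q_gt0.
rewrite /Gf; under eq_bigr => u _ do rewrite sqrrB.
rewrite big_split /= sumrB sum_gf2 sumr_const sumrMnl -mulr_suml sum_gf.
rewrite -[_ *+ #|K|]mulr_natr -[_ *+ 2]mulr_natr.
field.
exact: q0.
Qed.

Lemma Gf_ge0 v : 0 <= Gf v.
Proof. by apply: sumr_ge0 => u _; apply: sqr_ge0. Qed.

Lemma D_ge0 v : 0 <= q * Tf v - nE ^+ 2.
Proof. by rewrite -GT mulr_ge0 ?Gf_ge0 // ltW ?q_gt0. Qed.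

Lemma TfZ r v : r != 0 -> Tf (r *: v) = Tf v.
Proof.
move=> r0; apply: eq_bigr => x _; apply: eq_bigr => y _.
by rewrite !dotvZr (inj_eq (mulfI r0)).
Qed.
End Count1.


Section Lines.
Variables (K : finFieldType) (d : nat) (gamma : K) (W E : {set 'rV[K]_d}).
Hypothesis hg : ~~ [exists y : K, y ^+ 2 == gamma].
Hypothesis hW1 : forall v, v \in W -> (normv v == 1) || (normv v == gamma).
Hypothesis hW2 : forall v, (normv v == 1) || (normv v == gamma) ->
     (v \in W) (+) (- v \in W).
Local Notation q := (#|K|%:R : rat).
Local Notation nE := (#|E|%:R : rat).

Lemma q_gt1 : 1 < q.
Proof. by rewrite ltr1n finNzRing_gt1. Qed.

Lemma inj_scale : {in setX [set~ (0:K)] W &, injective (fun p : K * 'rV[K]_d => p.1 *: p.2)}.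
Proof.
move=> [r v] [r' v']; rewrite !in_setX !in_setC1 /= => /andP[r0 vW] /andP[r'0 v'W] Erv.
pose c := r'^-1 * r.
have v'E : v' = c *: v by rewrite /c -scalerA Erv scalerA mulVf // scale1r.
have nv : normv v' = c ^+ 2 * normv v by rewrite v'E normvZ.
have [_ c2] := norm_class hg (hW1 v'W) (hW1 vW) nv.
move/eqP: c2; rewrite sqrf_eq1 => /orP[]/eqP c1.
  have rr : r = r' by rewrite -(mulVKf r'0 r) -/c c1 mulr1.
  by rewrite v'E c1 scale1r rr.
exfalso; move: (hW2 (hW1 vW)); rewrite vW /=.
by rewrite v'E c1 scaleN1r in v'W; rewrite v'W.
Qed.

Lemma lines : \sum_(v in W) (q * Tf E v - nE ^+ 2) <= q ^+ d * nE.
Proof.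
set D := fun v => q * Tf E v - nE ^+ 2.
have q1 : 0 < q - 1 by rewrite subr_gt0 q_gt1.
rewrite -(ler_pM2l q1) mulrA -Tall.
have -> : (q - 1) * \sum_(v in W) D v =
    \sum_(r in [set~ (0:K)]) \sum_(v in W) D (r *: v).
  transitivity (\sum_(r in [set~ (0:K)]) \sum_(v in W) D v).
    rewrite [RHS]sumr_const cardsC1 -[RHS]mulr_natl -subn1 natrB ?(ltnW (finNzRing_gt1 _)) //.
  apply: eq_bigr => r; rewrite in_setC1 => r0; apply: eq_bigr => v _.
  by rewrite /D TfZ.
rewrite pair_big /=.
rewrite (eq_bigl (mem (setX [set~ (0:K)] W))); last by move=> [r v]; rewrite /= in_setX.
rewrite -(big_imset D inj_scale) /=.
rewrite [X in _ <= X](bigID (mem ((fun p : K * 'rV[K]_d => p.1 *: p.2) @: setX [set~ (0:K)] W))) /=.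
rewrite lerDl; apply: sumr_ge0 => w _; exact: D_ge0.
Qed.

End Lines.

Lemma sum_setX (I J : finType) (A : {set I}) (B : {set J}) (f : I * J -> rat) :
  \sum_(p in setX A B) f p = \sum_(i in A) \sum_(j in B) f (i, j).
Proof.
symmetry; rewrite pair_big /=; apply: eq_big => [[i j]|[i j] _]; by rewrite ?in_setX.
Qed.

Section Var.
Variables (K : finFieldType) (d : nat) (W E : {set 'rV[K]_d}) (F : {set 'rV[K]_d * K}).
Hypothesis hF : F \subset setX W [set: K].
Local Notation dot := (@dotv K d).
Local Notation q := (#|K|%:R : rat).
Local Notation nE := (#|E|%:R : rat).
Local Notation nF := (#|F|%:R : rat).
Local Notation mx := ((\max_(v in W) #|[set t : K | (v, t) \in F]|)%:R : rat).

Definition sf (p : 'rV[K]_d * ('rV[K]_d * K)) := p.2.2 - dot p.1 p.2.1.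
Definition nu c := \sum_(p in setX E F) ((sf p == c)%:R : rat).

Lemma nu_sum : \sum_(c : K) nu c = nE * nF.
Proof.
rewrite /nu exchange_big /=; under eq_bigr => p _ do rewrite sum_ind1T.
by rewrite sumr_const cardsX natrM.
Qed.

Lemma nu_expand c : nu c - nE * nF / q =
   \sum_(vt in F) (gf E vt.1 (vt.2 - c) - nE / q).
Proof.
rewrite sumrB sumr_const.
have -> : (nE / q) *+ #|F| = nE * nF / q by rewrite -[LHS]mulr_natr mulrAC.
congr (_ - _).
rewrite /nu sum_setX exchange_big /=; apply: eq_bigr => vt _.
apply: eq_bigr => x _; rewrite /sf /=.
have -> : (vt.2 - dot x vt.1 == c) = (dot x vt.1 == vt.2 - c).
  by apply/idP/idP => /eqP h; apply/eqP; [rewrite -h subKr | rewrite h subKr].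
by [].
Qed.

Lemma sumF_bound : \sum_(vt in F) Gf E vt.1 <= mx * \sum_(v in W) Gf E v.
Proof.
rewrite (partition_big (fun vt : 'rV[K]_d * K => vt.1) (mem W)); last first.
  by move=> [v t] /(subsetP hF); rewrite in_setX => /andP[].
rewrite mulr_sumr; apply: ler_sum => v vW.
rewrite (eq_bigr (fun _ => Gf E v)); last by move=> vt /andP[_ /eqP ->].
rewrite sumr_const -[X in X <= _]mulr_natr [X in _ <= X]mulrC ler_wpM2l ?Gf_ge0 // ler_nat.
apply: leq_trans (leq_bigmax_cond _ vW).
apply: leq_trans (leq_imset_card (fun t => (v, t)) _).
apply/subset_leq_card/subsetP => vt; rewrite unfold_in /= => /andP[vtF /eqP v1].
apply/imsetP; exists vt.2; last by rewrite -v1; case: vt {vtF v1}.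
by rewrite inE -v1; case: vt vtF {v1}.
Qed.

Lemma var_bound : \sum_(c : K) (nu c - nE * nF / q) ^+ 2 <= nF * mx * \sum_(v in W) Gf E v.
Proof.

rewrite (eq_bigr (fun c : K => (\sum_(vt in F) (gf E vt.1 (vt.2 - c) - nE / q)) ^+ 2)); last by move=> c _; rewrite nu_expand.
apply: (@le_trans _ _ (\sum_(c : K) (nF * \sum_(vt in F) (gf E vt.1 (vt.2 - c) - nE / q) ^+ 2))).
  by apply: ler_sum => c _; exact: CS.
rewrite -mulr_sumr exchange_big /= -mulrA ler_wpM2l ?ler0n //.
apply: le_trans (sumF_bound); apply: ler_sum => vt _; rewrite le_eqVlt; apply/orP; left; apply/eqP.
by rewrite /Gf (reindex_inj (inv_inj (subKr vt.2))) /=; apply: eq_bigr => u _; rewrite subKr.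
Qed.
End Var.

Section Gen2.
Variables (T U : finType).

Lemma pairsum (P : {set T}) (f g : T -> U) :
  \sum_(p in P) \sum_(p' in P) ((f p == g p')%:R : rat) =
  \sum_(c : U) (\sum_(p in P) ((f p == c)%:R : rat)) * (\sum_(p' in P) ((g p' == c)%:R : rat)).
Proof.
under [RHS]eq_bigr => c _ do rewrite mulr_suml.
rewrite [RHS]exchange_big /=; apply: eq_bigr => p _.
under [RHS]eq_bigr => c _ do rewrite mulr_sumr.
rewrite [RHS]exchange_big /=; apply: eq_bigr => p' _; by rewrite sum_ind2T.
Qed.

Lemma CS_count (P : {set T}) (phi : T -> U) :
  (#|P|%:R : rat) ^+ 2 <= #|phi @: P|%:R *
     \sum_(p in P) \sum_(p' in P) ((phi p == phi p')%:R : rat).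
Proof.
set A := phi @: P.
have N1 : (#|P|%:R : rat) = \sum_(c in A) \sum_(p in P) ((phi p == c)%:R : rat).
  rewrite exchange_big /= -sumr_const; apply: eq_bigr => p pP.
  by rewrite sum_ind1 // imset_f.
have Q1 : \sum_(p in P) \sum_(p' in P) ((phi p == phi p')%:R : rat) =
    \sum_(c in A) (\sum_(p in P) ((phi p == c)%:R : rat)) ^+ 2.
  under [RHS]eq_bigr => c _ do rewrite expr2 mulr_suml.
  rewrite [RHS]exchange_big /=; apply: eq_bigr => p pP.
  under [RHS]eq_bigr => c _ do rewrite mulr_sumr.
  rewrite [RHS]exchange_big /=; apply: eq_bigr => p' _; rewrite sum_ind2 //.
  exact: imset_f.
by rewrite N1 Q1; apply: CS.
Qed.

Lemma card_factor (V : finType) (P : {set T}) (phi : T -> U) (cls : T -> V) :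
  {in P &, forall p p', cls p = cls p' -> phi p = phi p'} ->
  (#|phi @: P| <= #|cls @: P|)%N.
Proof.
move=> H.
case: (set_0Vmem P) => [->|[p0 p0P]]; first by rewrite imset0 cards0.
pose g (C : V) := odflt (phi p0) (omap phi [pick p in P | cls p == C]).
apply: leq_trans (leq_imset_card g _).
apply/subset_leq_card/subsetP => u /imsetP [p pP ->].
apply/imsetP; exists (cls p); first exact: imset_f.
rewrite /g; case: pickP => [p' /andP[p'P /eqP e]|/(_ p)]; last by rewrite pP eqxx.
by rewrite /= (H _ _ p'P pP e).
Qed.
End Gen2.

Section Final.
Variables (K : finFieldType) (d : nat) (gamma : K) (W E : {set 'rV[K]_d}) (F : {set 'rV[K]_d * K}).
Hypothesis d1 : (1 <= d)%N.
Hypothesis hg : ~~ [exists y : K, y ^+ 2 == gamma].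
Hypothesis hW1 : forall v, v \in W -> (normv v == 1) || (normv v == gamma).
Hypothesis hW2 : forall v, (normv v == 1) || (normv v == gamma) ->
     (v \in W) (+) (- v \in W).
Hypothesis hF : F \subset setX W [set: K].
Local Notation q := (#|K|%:R : rat).
Local Notation nE := (#|E|%:R : rat).
Local Notation nF := (#|F|%:R : rat).
Local Notation mx := ((\max_(v in W) #|[set t : K | (v, t) \in F]|)%:R : rat).

Definition phi (p : 'rV[K]_d * ('rV[K]_d * K)) := (normv p.2.1, sf p ^+ 2).

Lemma S_eq : \sum_(c : K) nu E F c ^+ 2 =
   \sum_(c : K) (nu E F c - nE * nF / q) ^+ 2 + (nE * nF) ^+ 2 / q.
Proof.
have q0 : q != 0 by rewrite gt_eqF ?q_gt0.
under [X in _ = X + _]eq_bigr => c _ do rewrite sqrrB.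
rewrite big_split sumrB /= sumr_const sumrMnl -mulr_suml nu_sum.
rewrite -[_ *+ #|K|]mulr_natr -[_ *+ 2]mulr_natr.
field; exact: q0.
Qed.

Lemma sumG : \sum_(v in W) Gf E v <= q ^+ d.-1 * nE.
Proof.
have qp := q_gt0 K.
rewrite -(ler_pM2l qp) mulr_sumr.
under eq_bigr => v _ do rewrite GT.
by rewrite mulrA -exprS prednK //; apply: lines hg hW1 hW2.
Qed.

Lemma Q_le : \sum_(p in setX E F) \sum_(p' in setX E F) ((phi p == phi p')%:R : rat) <=
   2 * q^-1 * nE ^+ 2 * nF ^+ 2 + 2 * q ^+ (d.-1) * nE * nF * mx.
Proof.
set P := setX E F.
set nu' := fun c : K => \sum_(p in P) ((- sf p == c)%:R : rat).
have step1 : \sum_(p in P) \sum_(p' in P) ((phi p == phi p')%:R : rat) <=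
   \sum_(c : K) nu E F c * nu E F c + \sum_(c : K) nu E F c * nu' c.
  rewrite /nu -!pairsum -big_split /=; apply: ler_sum => p _.
  rewrite -big_split /=; apply: ler_sum => p' _.
  case: eqP => [[_ /eqP]|_]; last by rewrite addr_ge0 ?ler0n.
  rewrite eqf_sqr => /orP[] ->; first by rewrite lerDl ler0n.
  by rewrite lerDr ler0n.
have step2 : \sum_(c : K) nu' c ^+ 2 = \sum_(c : K) nu E F c ^+ 2.
  under eq_bigr => c _ do rewrite expr2.
  under [RHS]eq_bigr => c _ do rewrite expr2.
  rewrite /nu' /nu -!pairsum; apply: eq_bigr => p _; apply: eq_bigr => p' _.
  by rewrite eqr_opp.
have step3 : \sum_(c : K) nu E F c * nu' c <= \sum_(c : K) nu E F c ^+ 2.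
  apply: (@le_trans _ _ (\sum_(c : K) (nu E F c ^+ 2 + nu' c ^+ 2) / 2%:R)).
    apply: ler_sum => c _; set a := nu E F c; set b := nu' c.
    have := sqr_ge0 (a - b); rewrite sqrrB; nra.
  by rewrite -mulr_suml big_split /= step2; lra.
have step4 := @var_bound _ _ W E F hF.
have step5 := sumG.
rewrite S_eq in step3.
have mx0 : 0 <= mx by rewrite ler0n.
have nF0 : 0 <= nF by rewrite ler0n.
have nE0 : 0 <= nE by rewrite ler0n.
have step6 : nF * mx * \sum_(v in W) Gf E v <= nF * mx * (q ^+ d.-1 * nE).
  by rewrite ler_wpM2l ?mulr_ge0.
apply: le_trans step1 _.
have SS : \sum_(c : K) nu E F c * nu E F c = \sum_(c : K) nu E F c ^+ 2.
  by apply: eq_bigr => c _; rewrite expr2.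
rewrite SS S_eq.
move: step3 step4 step6; set V := \sum_(c : K) _; set G := \sum_(v in W) _.
move=> s3 s4 s6.
set V2 := \sum_(c : K) (nu E F c - _) ^+ 2 in s3 s4 *.
set A := (#|K|%:R : rat) ^+ d.-1 in s6 *.
have q0 : q != 0 by rewrite gt_eqF ?q_gt0.
lra.
Qed.
End Final.

Unset Implicit Arguments.

Lemma pair_refl (K : finFieldType) (d : nat) (p : 'rV[K]_d * {set 'rV[K]_d}) : pair_equiv p p.
Proof.
apply/existsP; exists 1%:M; apply/andP; split.
  by apply/forallP => y; rewrite mulmx1.
apply/eqP; rewrite -[RHS]imset_id; apply: eq_imset => y.
by rewrite mulmx1 subrK.
Qed.

Lemma fin_arith (D Den N q : rat) : 0 < N -> N ^+ 2 <= D * Den ->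
  Den * q < 4 * N ^+ 2 -> 0 < q -> 0 <= Den -> q / 4 < D.
Proof.
move=> N0 kDen F4 qp Den0.
rewrite ltNge; apply/negP => Hc.
have F5 : D * Den <= q / 4 * Den by rewrite ler_wpM2r.
have F6 : q / 4 * Den = (Den * q) / 4 by ring.
lra.
Qed.

Theorem mainTheorem2 (K : finFieldType) (d : nat) (gamma : K)
    (W : {set 'rV[K]_d}) (E : {set 'rV[K]_d}) (F : {set 'rV[K]_d * K}) :
  odd #|K| ->
  (2 <= d)%N ->
  gamma != 0 ->
  ~~ [exists y : K, y ^+ 2 == gamma] ->
  (forall v, v \in W -> (normv v == 1) || (normv v == gamma)) ->
  (forall v, (normv v == 1) || (normv v == gamma) ->
     (v \in W) (+) (- v \in W)) ->
  F \subset setX W [set: K] ->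
  let q : rat := (#|K|)%:R in
  let nE : rat := (#|E|)%:R in
  let nF : rat := (#|F|)%:R in
  let mx : rat := (\max_(v in W) #|[set t : K | (v, t) \in F]|)%:R in
  (#|Delta E F|)%:R >=
    (nE ^+ 2 * nF ^+ 2) /
      (2 * q^-1 * nE ^+ 2 * nF ^+ 2 + 2 * q ^+ (d.-1) * nE * nF * mx)
  /\ (nE * nF > q ^+ d.+1 -> (#|Delta E F|)%:R > q / 4).
Proof.
move=> oK d2 g0 hg hW1 hW2 hF q nE nF mx.
have h2 := two_neq0 oK.
have d1 : (1 <= d)%N by apply: leq_trans d2.
set P := setX E F.
pose cls (p : 'rV[K]_d * ('rV[K]_d * K)) := eqclass (p.1, hyperplane p.2.1 p.2.2).
have DE : Delta E F = cls @: P.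
  by rewrite /Delta curry_imset2X; apply: eq_imset => -[x vt].
pose ph := @phi K d.
have kD : (#|ph @: P| <= #|Delta E F|)%N.
  rewrite DE; apply: card_factor => -[x [v t]] [x' [v' t']].
  rewrite !in_setX /= => /andP[_ /(subsetP hF)] + /andP[_ /(subsetP hF)].
  rewrite !in_setX /= => /andP[vW _] /andP[v'W _] e.
  have : (x', hyperplane v' t') \in cls (x', (v', t')) by rewrite inE pair_refl.
  rewrite -e inE => /(pair_inv h2 hg (hW1 _ vW) (hW1 _ v'W)) [n1 n2].
  by rewrite /ph /phi /sf /= n1 n2.
have CSk := CS_count P ph.
have Qle := Q_le E d1 hg hW1 hW2 hF.
rewrite cardsX natrM -/nE -/nF in CSk.
set k := (#|ph @: P|%:R : rat) in CSk.
set Q := \sum_(p in P) _ in CSk Qle.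
have Qle' : Q <= 2 / q * nE ^+ 2 * nF ^+ 2 + 2 * q ^+ d.-1 * nE * nF * mx := Qle.
set Den := 2 / q * nE ^+ 2 * nF ^+ 2 + 2 * q ^+ d.-1 * nE * nF * mx in Qle' *.
set D' := (#|Delta E F|%:R : rat).
have kk : k <= D' by rewrite ler_nat.
have k0 : 0 <= k by rewrite ler0n.
have qp : 0 < q by apply: q_gt0.
have mx0 : 0 <= mx by rewrite ler0n.
have nF0 : 0 <= nF by rewrite ler0n.
have nE0 : 0 <= nE by rewrite ler0n.
have a0 : 0 <= q ^+ d.-1 by rewrite exprn_ge0 // ltW.
have Den0 : 0 <= Den.
  by apply: addr_ge0; rewrite !mulr_ge0 ?exprn_ge0 ?invr_ge0 ?ler0n ?(ltW qp).
have kDen : (nE * nF) ^+ 2 <= D' * Den.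
  have kQ : k * Q <= k * Den := ler_wpM2l k0 Qle'.
  have kD2 : k * Den <= D' * Den := ler_wpM2r Den0 kk.

  lra.
split.
  case: (eqVneq Den 0) => [->|Dn0]; first by rewrite invr0 mulr0 ler0n.
  have Dp : 0 < Den by rewrite lt_def Dn0.
  by rewrite ler_pdivrMr // -exprMn.
move=> H.
set N := nE * nF.
have qd : q ^+ d.+1 = q ^+ d.-1 * q * q by rewrite exprS -{1}(prednK d1) exprS; ring.
rewrite qd in H.
have F1 : mx <= q.
  rewrite ler_nat; apply/bigmax_leqP => v _.
  by rewrite -[X in (_ <= X)%N]cardsT subset_leq_card ?subsetT.
have N0 : 0 < N by apply: le_lt_trans H; rewrite !mulr_ge0 // ltW.
have F2 : q ^+ d.-1 * N * q * mx <= q ^+ d.-1 * N * q * q by rewrite ler_wpM2l // !mulr_ge0 // ltW.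
have F3 : q ^+ d.-1 * q * q * N < N * N by rewrite ltr_pM2r.
have E1 : Den * q = 2 * N ^+ 2 + 2 * q ^+ d.-1 * N * mx * q.
  have q0 : q != 0 by rewrite gt_eqF.
  rewrite /Den /N; field; exact: q0.
have F4 : Den * q < 4 * N ^+ 2 by rewrite E1; lra.
exact: (@fin_arith D' Den N q N0 kDen F4 qp Den0).
Qed.
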